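(* Let $A\in\mathbb{R}^{m\times n}$ have no zero row, with rows $a_1^T,\dots,a_m^T$, and let ${\bf u}=(\mu_1,\dots,\mu_m)\in\mathbb{R}^m$. Let $P_k(\mu_k)=I-\mu_k a_ka_k^T/\|a_k\|_2^2$, $Q_j({\bf u}_j)=P_m(\mu_m)\cdots P_{j+1}(\mu_{j+1})$ for $1\le j\le m-1$, $Q_m({\bf u}_m)=I$, and $$A_{\mathcal S}({\bf u})=\big(Q_1({\bf u}_1)a_1,\dots,Q_m({\bf u}_m)a_m\big)^T\in\mathbb{R}^{m\times n}.$$ Then there exists a unit upper triangular matrix $C({\bf u})\in\mathbb{R}^{m\times m}$ such that $A_{\mathcal S}({\bf u})=C({\bf u})A$.
   Context: ${\bf u}_j=(\mu_{j+1},\dots,\mu_m)$. A unit upper triangular matrix is an upper triangular matrix with all diagonal entries equal to $1$. *)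

(* Defs.v *)
From mathcomp Require Import all_boot all_order all_algebra.
Set Implicit Arguments. Unset Strict Implicit. Unset Printing Implicit Defensive.
Import Order.TTheory GRing.Theory Num.Theory.
Local Open Scope ring_scope.

Section Defs.
Variables (R : realFieldType) (m n : nat) (A : 'M[R]_(m, n)).

Definition acol (k : 'I_m) : 'cV[R]_n := (row k A)^T.

Definition nrm2 (k : 'I_m) : R := \sum_(j < n) A k j ^+ 2.

Definition Pk (k : 'I_m) (mu : R) : 'M[R]_n :=
  1%:M - (mu / nrm2 k) *: (acol k *m (acol k)^T).

(* Q_j(u_j) = P_m(mu_m) ... P_{j+1}(mu_{j+1})  (0-based indices here);
   the empty product (j = last index) is the identity. *)
Definition Qj (u : 'I_m -> R) (j : 'I_m) : 'M[R]_n :=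
  foldr (fun k M => M *m Pk k (u k)) 1%:M [seq k <- enum 'I_m | (nat_of_ord j < nat_of_ord k)%N].

Definition AS (u : 'I_m -> R) : 'M[R]_(m, n) :=
  \matrix_(i < m) (Qj u i *m acol i)^T.

End Defs.

Definition unit_upper_triangular (R : ringType) (m : nat) (C : 'M[R]_m) : Prop :=
  (forall i j : 'I_m, (j < i)%N -> C i j = 0) /\ (forall i : 'I_m, C i i = 1).

(* Main.v *)
Require Import Defs.
From mathcomp Require Import all_boot all_order all_algebra.
Import GRing.Theory Num.Theory.
Local Open Scope ring_scope.

Section Aux.
Variables (R : realFieldType) (m n : nat) (A : 'M[R]_(m, n)).

Definition inS (i : 'I_m) (v : 'rV[R]_n) : Prop :=
  exists c : 'rV[R]_m, (forall j : 'I_m, (j <= i)%N -> c 0 j = 0) /\ v = row i A + c *m A.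

Lemma step (i k : 'I_m) mu v : (i < k)%N -> inS i v -> inS i (v *m (Pk A k mu)^T).
Proof.
move=> lik [c [Hc ->]].
set a := mu / nrm2 A k.
have HP : (Pk A k mu)^T = 1%:M - a *: (acol A k *m (acol A k)^T).
  by rewrite /Pk linearB /= trmx1 linearZ /= trmx_mul trmxK.
set w := row i A + c *m A.
exists (c - (a * (w *m acol A k) 0 0) *: delta_mx 0 k); split.
  move=> j lji; rewrite !mxE Hc //.
  have -> : (j == k) = false.
    by apply/negbTE; apply/eqP => ejk; move: lji; rewrite ejk leqNgt lik.
  by rewrite andbF mulr0 subr0.
rewrite HP mulmxBr mulmx1 -scalemxAr mulmxA (mx11_scalar (w *m acol A k)).
rewrite mul_scalar_mx /acol trmxK rowE mulmxBl -addrA; congr (_ + _).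
by rewrite -scalemxAl scalerA [in RHS]mxE eqxx mulr1n.
Qed.


Lemma fold_inS' (u : 'I_m -> R) (i : 'I_m) (s : seq 'I_m) :
  all (fun k : 'I_m => (i < k)%N) s -> forall v, inS i v ->
  inS i (v *m (foldr (fun k M => M *m Pk A k (u k)) 1%:M s)^T).
Proof.
elim: s => [|k s IH] /= => [_ v Hv|/andP [lik Hs] v Hv].
  by rewrite trmx1 mulmx1.
rewrite trmx_mul mulmxA; apply: IH => //; exact: step.
Qed.

End Aux.

Theorem theorem3p5 (R : realFieldType) (m n : nat) (A : 'M[R]_(m, n))
  (hA : forall i : 'I_m, row i A != 0) (u : 'I_m -> R) :
  exists C : 'M[R]_m, unit_upper_triangular C /\ AS A u = C *m A.
Proof.
have H : forall i : 'I_m, @inS R m n A i (row i (AS A u)).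
  move=> i; rewrite /AS rowK trmx_mul /acol trmxK /Qj.
  apply: (@fold_inS' R m n A u i); first by apply/allP => k; rewrite mem_filter => /andP [].
  by exists 0; split => [j _|]; rewrite ?mxE // mul0mx addr0.
pose P := fun (i : 'I_m) (c : 'rV[R]_m) => (forall j : 'I_m, (j <= i)%N -> c 0 j = 0) /\ row i (AS A u) = row i A + c *m A.
have [c Hc] := @fin_all_exists _ (fun _ => 'rV[R]_m) P H.
rewrite /P in Hc.
exists (\matrix_(i, j) ((i == j)%:R + c i 0 j)); split; first split.
- move=> i j lji; rewrite mxE (proj1 (Hc i) j (ltnW lji)) addr0.
  have -> : (i == j) = false by apply/eqP => eij; move: lji; rewrite eij ltnn.
  by [].
- by move=> i; rewrite mxE (proj1 (Hc i)) // eqxx addr0.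
apply/row_matrixP => i; rewrite (proj2 (Hc i)) row_mul.
have -> : row i (\matrix_(i, j) ((i == j)%:R + c i 0 j)) = delta_mx 0 i + c i.
  by apply/rowP => j; rewrite !mxE eq_sym.
by rewrite mulmxDl -rowE.
Qed.
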